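(* Let $\mu$ be a probability measure and $\beta:\mathbb R^+\to\mathbb R^+$. Assume that every $f\in\mathcal A$ satisfies $$\int|f-m|\,d\mu\le\beta(s)\int\sqrt{\Gamma(f)}\,d\mu+s\,\mathrm{Osc}(f)\qquad\forall s\in(0,1),$$ where $m$ is a median of $f$ under $\mu$. Then every $f\in\mathcal A$ satisfies $$\mathrm{Var}_\mu(f)\le4\beta\Big(\frac s2\Big)^2\int\Gamma(f)\,d\mu+s\,\mathrm{Osc}(f)^2\qquad\forall s\in(0,1/4).$$
   Context: Standing framework: $\mu$ a probability measure on a Polish space $E$, $L$ a $\mu$-symmetric diffusion operator with an algebra $\mathcal A$ of bounded functions containing constants, and carré du champ $\Gamma(f)=\Gamma(f,f)$ where $\Gamma(f,g)=\frac12(L(fg)-fLg-gLf)$, satisfying the chain rule (in particular $\Gamma(f^2)=4f^2\Gamma(f)$). $\mathrm{Osc}(f)=\operatorname{ess\,sup}f-\operatorname{ess\,inf}f$. *)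

(* Defs.v *)
From HB Require Import structures.
From mathcomp Require Import all_boot all_order all_algebra.
From mathcomp Require Import all_classical all_reals all_analysis ess_sup_inf.
Set Implicit Arguments. Unset Strict Implicit. Unset Printing Implicit Defensive.
Import Order.TTheory GRing.Theory Num.Theory.
Import numFieldNormedType.Exports.
Local Open Scope classical_set_scope.
Local Open Scope ring_scope.

Section defs.
Context d (T : measurableType d) (R : realType).

Definition Gam (L : (T -> R) -> (T -> R)) (f g : T -> R) : T -> R :=
  fun x => (L (fun y => f y * g y) x - f x * L g x - g x * L f x) / 2.

Definition is_median (mu : probability T R) (f : T -> R) (m : R) : Prop :=
  ((2^-1)%:E <= mu [set x | (m <= f x)%R])%E /\
  ((2^-1)%:E <= mu [set x | (f x <= m)%R])%E.

Definition Osc (mu : probability T R) (f : T -> R) : R :=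
  fine (ess_sup mu (EFin \o f) - ess_inf mu (EFin \o f))%E.

Definition Var (mu : probability T R) (f : T -> R) : R :=
  \int[mu]_x (f x - \int[mu]_y f y) ^+ 2.

(* D is the sequence of successive derivatives of D 0 (so D 0 is C^infinity) *)
Definition derivs_seq (D : nat -> R -> R) : Prop :=
  forall (n : nat) (x : R), is_derive x 1 (D n) (D n.+1 x).

Record diffusion_framework (mu : probability T R) (A : set (T -> R))
    (L : (T -> R) -> (T -> R)) : Prop := {
  A_meas : forall f, A f -> measurable_fun setT f;
  A_bdd : forall f, A f -> exists M : R, forall x, `|f x| <= M;
  A_cst : forall c : R, A (fun _ => c);
  A_add : forall f g, A f -> A g -> A (fun x => f x + g x);
  A_mul : forall f g, A f -> A g -> A (fun x => f x * g x);
  L_A : forall f, A f -> A (L f);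
  L_add : forall f g, A f -> A g -> L (fun x => f x + g x) = (fun x => L f x + L g x);
  L_scale : forall (c : R) f, A f -> L (fun x => c * f x) = (fun x => c * L f x);
  L_sym : forall f g, A f -> A g ->
    \int[mu]_x (f x * L g x) = \int[mu]_x (g x * L f x);
  Gam_ge0 : forall f, A f -> forall x, 0 <= Gam L f f x;
  A_smooth : forall D, derivs_seq D -> forall f, A f -> A (D 0%N \o f);
  Gam_chain : forall D, derivs_seq D -> forall f g, A f -> A g ->
    Gam L (D 0%N \o f) g = (fun x => D 1%N (f x) * Gam L f g x)
}.

End defs.

(* Main.v *)
Require Import Defs.
From HB Require Import structures.
From mathcomp Require Import all_boot all_order all_algebra.
From mathcomp Require Import all_classical all_reals all_analysis ess_sup_inf.
From mathcomp Require Import lra ring measurable_realfun.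
Import Order.TTheory GRing.Theory Num.Theory.
Import numFieldNormedType.Exports.
Local Open Scope classical_set_scope.
Local Open Scope ring_scope.

Module Helpers.
Set Implicit Arguments. Unset Strict Implicit. Unset Printing Implicit Defensive.
Section Smooth.
Variable R : realType.
Implicit Types f g h : R -> R.

Fixpoint Sn (n : nat) (f : R -> R) : Prop :=
  match n with 0 => True | n.+1 => (forall x, derivable f x 1) /\ Sn n (derive1 f) end.

Lemma Sn_le n f : Sn n.+1 f -> Sn n f.
Proof. elim: n f => [//|n IH] f [df Hf]; split => //; exact: IH. Qed.

Lemma Sn_iter k f : Sn k.+1 f -> forall x, derivable (iter k (@derive1 _ R) f) x 1.
Proof.
elim: k f => [|k IH] f [df Hf] x; first exact: df.
rewrite iterSr; exact: IH.
Qed.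

Lemma Sn_cst n (c : R) : Sn n (fun _ => c).
Proof.
elim: n c => [//|n IH] c; split => [x|]; first exact: derivable_cst.
have -> : derive1 (fun _ : R => c) = fun _ => 0.
  by apply/funext => x; rewrite derive1E derive_cst.
exact: IH.
Qed.

Lemma Sn_id n : Sn n (fun x : R => x).
Proof.
case: n => [//|n]; split => [x|]; first exact: derivable_id.
have -> : derive1 (fun x : R => x) = fun _ => 1.
  by apply/funext => x; rewrite derive1E derive_id.
exact: Sn_cst.
Qed.

Lemma Sn_D n f g : Sn n f -> Sn n g -> Sn n (fun x => f x + g x).
Proof.
elim: n f g => [//|n IH] f g [df Hf] [dg Hg]; split => [x|].
  exact: (derivableD (df x) (dg x)).
have -> : derive1 (fun x => f x + g x) = fun x => derive1 f x + derive1 g x.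
  by apply/funext => x; rewrite !derive1E (deriveD (df x) (dg x)).
exact: IH.
Qed.

Lemma Sn_M n f g : Sn n f -> Sn n g -> Sn n (fun x => f x * g x).
Proof.
elim: n f g => [//|n IH] f g [df Hf] [dg Hg]; split => [x|].
  exact: (derivableM (df x) (dg x)).
have -> : derive1 (fun x => f x * g x) =
    fun x => f x * derive1 g x + g x * derive1 f x.
  by apply/funext => x; rewrite !derive1E (deriveM (df x) (dg x)).
apply: Sn_D; apply: IH => //; exact: Sn_le.
Qed.

Lemma Sn_V n h : (forall x, h x != 0) -> Sn n h -> Sn n (fun x => (h x)^-1).
Proof.
move=> h0; elim: n h h0 => [//|n IH] h h0 [dh Hh]; split => [x|].
  exact: (derivableV (h0 x) (dh x)).
have -> : derive1 (fun x => (h x)^-1) =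
    fun x => ((fun _ => -1) x * derive1 h x) * ((h x)^-1 * (h x)^-1).
  apply/funext => x; rewrite !derive1E (deriveV (h0 x) (dh x)).
  by rewrite /= -invrM ?unitfE ?h0 // -expr2 mulN1r mulNr mulrC -mulNr.
apply: Sn_M; first by apply: Sn_M => //; exact: Sn_cst.
by apply: Sn_M; apply: IH => //; exact: Sn_le.
Qed.

Lemma der_sqrt (y : R) : 0 < y -> derivable (@Num.sqrt R) y 1.
Proof. by move=> y0; case: (is_derive1_sqrt y0). Qed.

Lemma Sn_sqrt n h : (forall x, 0 < h x) -> Sn n h -> Sn n (fun x => Num.sqrt (h x)).
Proof.
move=> h0; elim: n h h0 => [//|n IH] h h0 [dh Hh].
have ds x : derivable (fun x => Num.sqrt (h x)) x 1.
  apply/derivable1_diffP; apply: differentiable_comp.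
    exact/derivable1_diffP.
  apply/derivable1_diffP; exact: der_sqrt.
split => // .
have -> : derive1 (fun x => Num.sqrt (h x)) =
    fun x => (2 * Num.sqrt (h x))^-1 * derive1 h x.
  apply/funext => x.
  rewrite (@derive1_comp _ h Num.sqrt x (dh x)).
    by rewrite derive1E derive_sqrt.
  exact: der_sqrt.
apply: Sn_M => //; apply: Sn_V.
  by move=> x; rewrite mulf_neq0 // gt_eqF // sqrtr_gt0.
apply: Sn_M; first exact: Sn_cst.
apply: IH => //; exact: Sn_le.
Qed.


Lemma is_derive_sqrt_comp h (x dh : R) : is_derive x 1 h dh -> 0 < h x ->
  is_derive x 1 (fun y => Num.sqrt (h y)) ((2 * Num.sqrt (h x))^-1 * dh).
Proof.
move=> Hd hx; have dh' : derivable h x 1 by case: Hd.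
have ds := der_sqrt hx.
split.
  apply/derivable1_diffP; apply: differentiable_comp; exact/derivable1_diffP.
rewrite -derive1E (derive1_comp dh' ds) !derive1E derive_sqrt //.
by case: Hd => _ ->.
Qed.

Definition sq (e y : R) := Num.sqrt (y * y + e * e).
Definition Phi (m e x : R) := (x - m) * sq e (x - m).

Section PhiProps.
Variables (m e : R).
Hypothesis e0 : 0 < e.

Lemma sq_pos y : 0 < sq e y.
Proof. rewrite /sq sqrtr_gt0; have := mulr_gt0 e0 e0; have := sqr_ge0 y; rewrite expr2; lra. Qed.

Lemma sq_sqr y : sq e y * sq e y = y * y + e * e.
Proof. by rewrite -expr2 sqr_sqrtr //; nra. Qed.

Lemma sq_ge y : `|y| <= sq e y.
Proof.
have h1 := sq_sqr y; have h2 := sq_pos y; have h3 := normr_ge0 y.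
have h4 : `|y| * `|y| = y * y by rewrite -normrM ger0_norm // -expr2 sqr_ge0.
nra.
Qed.

Lemma sq_le y : sq e y <= `|y| + e.
Proof.
have h3 := normr_ge0 y.
have h4 : `|y| * `|y| = y * y by rewrite -normrM ger0_norm // -expr2 sqr_ge0.
have h5 : 0 <= `|y| + e by rewrite addr_ge0 // ltW.
rewrite -(ger0_norm h5) -sqrtr_sqr /sq; apply: ler_wsqrtr; rewrite expr2.
rewrite mulrDl !mulrDr h4; have := mulr_ge0 h3 (ltW e0); rewrite (mulrC e); lra.
Qed.

Lemma Phi_ge0 x : (0 <= Phi m e x) = (m <= x).
Proof. by rewrite /Phi pmulr_lge0 ?sq_pos // subr_ge0. Qed.

Lemma Phi_le0 x : (Phi m e x <= 0) = (x <= m).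
Proof. by rewrite /Phi pmulr_lle0 ?sq_pos // subr_le0. Qed.

Lemma Phi_abs x : (x - m) ^+ 2 <= `|Phi m e x|.
Proof.
rewrite /Phi normrM (ger0_norm (ltW (sq_pos _))) -[_ ^+ 2]ger0_norm ?sqr_ge0 //.
rewrite normrX expr2; apply: ler_pM => //; exact: sq_ge.
Qed.

Lemma sq_mono y z : 0 <= y -> y <= z -> sq e y <= sq e z.
Proof. move=> y0 yz; rewrite /sq; apply: ler_wsqrtr; nra. Qed.

Lemma sq_N y : sq e (- y) = sq e y.
Proof. by rewrite /sq mulrNN. Qed.

Lemma Phi_mono x z : x <= z -> Phi m e x <= Phi m e z.
Proof.
move=> xz; rewrite /Phi; set y1 := x - m; set y2 := z - m.
have y12 : y1 <= y2 by rewrite /y1 /y2 lerB.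
have p1 := sq_pos y1; have p2 := sq_pos y2.
have [h1|h1] := leP 0 y1.
  have := sq_mono h1 y12; nra.
have [h2|h2] := leP 0 y2; first nra.
have hy2 : 0 <= - y2 by lra.
have hy21 : - y2 <= - y1 by lra.
have := sq_mono hy2 hy21; rewrite !sq_N => h; nra.
Qed.

Lemma Phi_osc a b : a <= m <= b -> Phi m e b - Phi m e a <= (b - a) ^+ 2 + e * (b - a).
Proof.
move=> /andP[am mb]; rewrite /Phi.
have l1 := sq_le (b - m); have l2 := sq_le (a - m).
have h5 : 0 <= b - m by lra.
have h6 : a - m <= 0 by lra.
rewrite (ger0_norm h5) in l1; rewrite (ler0_norm h6) in l2.
rewrite expr2; nra.
Qed.

Lemma Sn_Phi n : Sn n (Phi m e).
Proof.
apply: (@Sn_M n (fun x => x - m) (fun x => sq e (x - m))).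
  exact: Sn_D (Sn_id n) (Sn_cst n (- m)).
apply: (@Sn_sqrt n (fun x => (x - m) * (x - m) + e * e)).
  move=> x; have := mulr_gt0 e0 e0; have := sqr_ge0 (x - m); rewrite expr2; lra.
apply: Sn_D (Sn_cst _ _); apply: Sn_M; exact: Sn_D (Sn_id n) (Sn_cst n (- m)).
Qed.

Lemma dPhi x : derive1 (Phi m e) x =
  (x - m) * ((2 * sq e (x - m))^-1 * ((x - m) * 1 + (x - m) * 1)) + sq e (x - m) * 1.
Proof.
have d1 : is_derive x 1 (fun x => x - m) 1 by exact: is_derive_shift.
have dh : is_derive x 1 (fun x => (x - m) * (x - m) + e * e)
    ((x - m) * 1 + (x - m) * 1).
  have H := is_deriveD (is_deriveM d1 d1) (@is_derive_cst _ _ _ (e * e) x 1).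
  apply: (is_derive_eq H).
  by rewrite /= addr0.
have hx : 0 < (x - m) * (x - m) + e * e.
  have := mulr_gt0 e0 e0; have := sqr_ge0 (x - m); rewrite expr2; lra.
have ds := is_derive_sqrt_comp dh hx.
rewrite derive1E /Phi.
have := @is_deriveM _ _ (fun x => x - m) (fun x => sq e (x - m)) x 1 _ _ d1 ds.
by move=> H; rewrite (@derive_val _ _ _ _ _ _ _ H).
Qed.

Lemma dPhi_bound x : 0 <= derive1 (Phi m e) x <= 2 * (`|x - m| + e).
Proof.
rewrite dPhi; set y := x - m; have sp := sq_pos y; have ss := sq_sqr y.
have sl := sq_le y; set s := sq e y in sp ss sl *.
have -> : y * ((2 * s)^-1 * (y * 1 + y * 1)) + s * 1 = y * y * s^-1 + s.
  by field; rewrite gt_eqF.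
have u0 : 0 < s^-1 by rewrite invr_gt0.
have su : s * s^-1 = 1 by rewrite mulfV // gt_eqF.
have := sqr_ge0 y; rewrite expr2 => yy.
apply/andP; split; first by nra.
have : y * y * s^-1 <= s by nra.
lra.
Qed.

End PhiProps.
End Smooth.

Section Med.
Context d (T : measurableType d) (R : realType) (mu : probability T R).

Lemma mu_bigcup_le (F : nat -> set T) (c : \bar R) :
  (forall n, measurable (F n)) -> nondecreasing_seq F ->
  (forall n, mu (F n) <= c)%E -> (mu (\bigcup_n F n) <= c)%E.
Proof.
move=> mF ndF Fc.
have h := @nondecreasing_cvg_mu _ _ _ mu F mF (bigcupT_measurable F mF) ndF.
rewrite -(cvg_lim _ h) //; apply: lime_le; first by apply/cvg_ex; eexists; exact: h.
by apply: nearW => n; exact: Fc.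
Qed.

Lemma mge (f : T -> R) (a : R) : measurable_fun setT f -> measurable [set x | a <= f x].
Proof.
move=> mf; have := mf measurableT _ (measurable_itv `[a, +oo[); rewrite setTI.
suff -> : f @^-1` `[a, +oo[ = [set x | a <= f x] by [].
by apply/seteqP; split => x /=; rewrite in_itv /= andbT.
Qed.

Lemma mle (f : T -> R) (a : R) : measurable_fun setT f -> measurable [set x | f x <= a].
Proof.
move=> mf; have := mf measurableT _ (measurable_itv `]-oo, a]); rewrite setTI.
suff -> : f @^-1` `]-oo, a] = [set x | f x <= a] by [].
by apply/seteqP; split => x /=; rewrite in_itv /=.
Qed.

Lemma half_compl (A : set T) : measurable A ->
  (mu A <= (2^-1)%:E)%E -> ((2^-1)%:E <= mu (~` A))%E.
Proof.
move=> mA hA; rewrite probability_setC //.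
have : (mu A = (fine (mu A))%:E) by rewrite fineK // fin_num_measure.
move=> e; rewrite e in hA *; rewrite lee_fin in hA.
by rewrite -EFinB lee_fin; lra.
Qed.

Lemma setC_le (g : T -> R) a : [set x | g x <= a] = ~` [set x | a < g x].
Proof.
apply/seteqP; split => x /=; first by move=> h h2; rewrite ltNge h in h2.
by move=> /negP; rewrite -leNgt.
Qed.

Lemma setC_ge (g : T -> R) a : [set x | a <= g x] = ~` [set x | g x < a].
Proof.
apply/seteqP; split => x /=; first by move=> h h2; rewrite ltNge h in h2.
by move=> /negP; rewrite -leNgt.
Qed.

Lemma setC_lt (g : T -> R) a : [set x | a < g x] = ~` [set x | g x <= a].
Proof. by rewrite setC_le setCK. Qed.

Lemma setC_gt (g : T -> R) a : [set x | g x < a] = ~` [set x | a <= g x].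
Proof. by rewrite setC_ge setCK. Qed.

Lemma half_compl2 (A : set T) : measurable A ->
  ((2^-1)%:E <= mu A)%E -> (mu (~` A) <= (2^-1)%:E)%E.
Proof.
move=> mA hA; rewrite probability_setC //.
have : (mu A = (fine (mu A))%:E) by rewrite fineK // fin_num_measure.
move=> e; rewrite e in hA *; rewrite lee_fin in hA.
by rewrite -EFinB lee_fin; lra.
Qed.

Lemma median_exists (f : T -> R) (M : R) : measurable_fun setT f ->
  (forall x, `|f x| <= M) -> exists m, is_median mu f m.
Proof.
move=> mf fM.
set S := [set t : R | ((2^-1)%:E <= mu [set x | (t <= f x)%R])%E].
have S0 : S (- M).
  rewrite /S /=; have -> : [set x | - M <= f x] = setT.
    apply/seteqP; split => x //= _; have := fM x; rewrite ler_norml; by case/andP.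
  by rewrite probability_setT lee_fin invf_le1 // ler1n.
have Sub : ubound S (M + 1).
  move=> t St; rewrite leNgt; apply/negP => Mt; move: St; rewrite /S /=.
  have -> : [set x | t <= f x] = set0.
    apply/seteqP; split => x //= tx; have := fM x; rewrite ler_norml => /andP[_ h].
    lra.
  by rewrite measure0 lee_fin leNgt invr_gt0 ltr0n.
have hS : has_sup S by split; [exists (- M) | exists (M + 1)].
exists (sup S); split.
- have -> : [set x | sup S <= f x] = ~` [set x | f x < sup S].
    by apply/seteqP; split => x /=; rewrite leNgt => /negP.
  apply: half_compl.
    rewrite setC_gt; exact/measurableC/mge.
  have -> : [set x | f x < sup S] =
      \bigcup_n [set x | f x <= sup S - n.+1%:R^-1].
    apply/seteqP; split => x /=.
      move=> /ltr_add_invr [k hk]; exists k => //=; rewrite lerBrDr; exact: ltW.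
    move=> [k _ /=] h; apply: (le_lt_trans h); rewrite ltrBlDr ltrDl invr_gt0 ltr0n //.
  apply: mu_bigcup_le.
  + move=> n; exact: mle.
  + move=> n k nk; rewrite subsetEset => x /= h; apply: (le_trans h).
    by apply: lerB => //; rewrite lef_pV2 ?posrE ?ltr0n // ler_nat.
  + move=> n.
    have hn : 0 < n.+1%:R^-1 :> R by rewrite invr_gt0 ltr0n.
    have [e Se he] := sup_adherent hn hS.
    apply: (@le_trans _ _ (mu (~` [set x | e <= f x]))).
      apply: le_measure; rewrite ?inE; [exact: mle | exact/measurableC/mge |].
      by move=> x /= h h2; have := le_lt_trans h (lt_le_trans he h2); rewrite ltxx.
    exact: half_compl2 (mge _ mf) Se.
- rewrite setC_le.
  apply: half_compl.
    rewrite setC_lt; exact/measurableC/mle.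
  have -> : [set x | sup S < f x] =
      \bigcup_n [set x | sup S + n.+1%:R^-1 <= f x].
    apply/seteqP; split => x /=.
      by move=> /ltr_add_invr [k hk]; exists k => //=; exact: ltW.
    move=> [k _ /=] h; apply: (lt_le_trans _ h); rewrite ltrDl invr_gt0 ltr0n //.
  apply: mu_bigcup_le.
  + move=> n; exact: mge.
  + move=> n k nk; rewrite subsetEset => x /= h; apply: (le_trans _ h).
    by apply: lerD => //; rewrite lef_pV2 ?posrE ?ltr0n // ler_nat.
  + move=> n.
    have hn : 0 < n.+1%:R^-1 :> R by rewrite invr_gt0 ltr0n.
    have nS : ~ S (sup S + n.+1%:R^-1).
      move=> /(sup_upper_bound hS); rewrite gerDl leNgt hn //.
    apply/ltW; rewrite ltNge; apply/negP; exact: nS.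
Qed.


Lemma half_pos : (0 < (2^-1 : R)%:E)%E.
Proof. by rewrite lte_fin invr_gt0 ltr0n. Qed.

Lemma ess_sup_info (h : T -> R) (K c : R) : measurable_fun setT h ->
  (forall x, `|h x| <= K) -> is_median mu h c ->
  exists b : R, ess_sup mu (EFin \o h) = b%:E /\ c <= b.
Proof.
move=> mh hK [hc1 hc2].
set E := ess_sup mu (EFin \o h).
have EK : (E <= K%:E)%E.
  apply: ess_sup_ler => t; rewrite lee_fin; exact: le_trans (ler_norm _) (hK t).
have cE : (c%:E <= E)%E.
  rewrite leNgt; apply/negP => Ec.
  have [N [mN N0 sN]] := ess_sup_ge mu (EFin \o h).
  have : (mu [set x | (c <= h x)%R] <= mu N)%E.
    apply: le_measure; rewrite ?inE; [exact: mge | exact: mN |].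
    move=> x /= cx; apply: sN => /= hE.
    by have := le_lt_trans hE Ec; rewrite lte_fin ltNge cx.
  rewrite N0 => h0; have := lt_le_trans half_pos (le_trans hc1 h0); by rewrite ltxx.
move: cE EK; case: E => [r| |] //=; rewrite ?lee_fin.
  by move=> cr _; exists r.
Qed.

Lemma ess_inf_info (h : T -> R) (K c : R) : measurable_fun setT h ->
  (forall x, `|h x| <= K) -> is_median mu h c ->
  exists a : R, ess_inf mu (EFin \o h) = a%:E /\ a <= c.
Proof.
move=> mh hK [hc1 hc2].
have := @ess_sup_info (fun x => - h x) K (- c).
case.
- exact: measurableT_comp.
- by move=> x; rewrite normrN.
- split.
    have -> : [set x | (- c <= - h x)%R] = [set x | (h x <= c)%R].
      by apply/seteqP; split => x /=; rewrite lerN2.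
    exact: hc2.
  have -> : [set x | (- h x <= - c)%R] = [set x | (c <= h x)%R].
    by apply/seteqP; split => x /=; rewrite lerN2.
  exact: hc1.
move=> b [hb cb]; exists (- b); split; last by rewrite lerNl.
rewrite ess_infEN.
have -> : (\- (EFin \o h))%E = EFin \o (fun x => - h x).
  by apply/funext => x /=; rewrite EFinN.
by rewrite hb EFinN.
Qed.



Definition Gd (h : T -> R) := measurable_fun setT h /\ exists M : R, forall x, `|h x| <= M.

Lemma Gd_int h : Gd h -> mu.-integrable setT (EFin \o h).
Proof.
move=> [mh [M hM]]; apply: measurable_bounded_integrable => //.
  exact: (le_lt_trans (probability_le1 mu measurableT) (ltry _)).
exists M; split; first by rewrite num_real.
move=> M' hM' x _; exact: le_trans (hM x) (ltW hM').
Qed.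

Lemma Gd_cst c : Gd (fun _ => c).
Proof. by split; [exact: measurable_cst | exists `|c|]. Qed.

Lemma Gd_add h1 h2 : Gd h1 -> Gd h2 -> Gd (fun x => h1 x + h2 x).
Proof.
move=> [m1 [M1 b1]] [m2 [M2 b2]]; split; first exact: measurable_funD.
exists (M1 + M2) => x; apply: le_trans (ler_normD _ _) _; exact: lerD.
Qed.

Lemma Gd_mul h1 h2 : Gd h1 -> Gd h2 -> Gd (fun x => h1 x * h2 x).
Proof.
move=> [m1 [M1 b1]] [m2 [M2 b2]]; split; first exact: measurable_funM.
exists (M1 * M2) => x; rewrite normrM; apply: ler_pM => //.
Qed.

Lemma Gd_opp h : Gd h -> Gd (fun x => - h x).
Proof.
move=> [m1 [M1 b1]]; split; first exact: measurableT_comp.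
by exists M1 => x; rewrite normrN.
Qed.

Lemma Gd_sub h1 h2 : Gd h1 -> Gd h2 -> Gd (fun x => h1 x - h2 x).
Proof. by move=> g1 g2; apply: Gd_add => //; exact: Gd_opp. Qed.

Lemma Gd_sqrt h : Gd h -> Gd (fun x => Num.sqrt (h x)).
Proof.
move=> [m1 [M1 b1]]; split.
  exact: (measurableT_comp (continuous_measurable_fun (@sqrt_continuous R)) m1).
exists (1 + M1) => x; rewrite ger0_norm ?sqrtr_ge0 //.
have [h0|h0] := leP 0 (h x); last by rewrite ltr0_sqrtr //; have := b1 x; have := normr_ge0 (h x); lra.
have hx := b1 x; rewrite ger0_norm // in hx.
have s0 := sqrtr_ge0 (h x); have ss := sqr_sqrtr h0.
rewrite expr2 in ss; nra.
Qed.

Lemma Gd_norm h : Gd h -> Gd (fun x => `|h x|).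
Proof.
move=> [m1 [M1 b1]]; split; first exact: measurableT_comp.
by exists M1 => x; rewrite normr_id.
Qed.

Lemma Gd_ext h1 h2 : (forall x, h1 x = h2 x) -> Gd h1 -> Gd h2.
Proof. by move=> e; have -> : h1 = h2 by apply/funext. Qed.



Lemma osc_comp (f : T -> R) (P : R -> R) K K' m c :
  measurable_fun setT f -> (forall x, `|f x| <= K) -> is_median mu f m ->
  measurable_fun setT (fun x => P (f x)) -> (forall x, `|P (f x)| <= K') ->
  is_median mu (fun x => P (f x)) c ->
  (forall x y, x <= y -> P x <= P y) ->
  exists a b, Osc mu f = b - a /\ a <= m <= b /\
    Osc mu (fun x => P (f x)) <= P b - P a.
Proof.
move=> mf hK hm mg hK' hc Pmono.
have [b [hb mb]] := ess_sup_info mf hK hm.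
have [a [ha am]] := ess_inf_info mf hK hm.
have [b' [hb' _]] := ess_sup_info mg hK' hc.
have [a' [ha' _]] := ess_inf_info mg hK' hc.
exists a, b; split; first by rewrite /Osc hb ha -EFinB.
split; first by rewrite am mb.
rewrite /Osc hb' ha' -EFinB /=.
have h1 : b' <= P b.
  rewrite -lee_fin -hb'; apply/ess_supP.
  have := ess_sup_ge mu (EFin \o f); rewrite hb; apply: filterS => x /=.
  by rewrite !lee_fin; exact: Pmono.
have h2 : P a <= a'.
  rewrite -lee_fin -ha'; apply/ess_infP.
  have := ess_inf_le mu (EFin \o f); rewrite ha; apply: filterS => x /=.
  by rewrite !lee_fin; exact: Pmono.
by apply: lerB.
Qed.

Lemma le_eps (X c K : R) : (forall e, 0 < e -> X <= c + e * K) -> X <= c.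
Proof.
move=> h; rewrite leNgt; apply/negP => cX.
have KQ : K <= K * K + 1 by nra.
have K1 : 0 < K * K + 1 by nra.
set e := (X - c) / (2 * (K * K + 1)).
have e0 : 0 < e by rewrite divr_gt0 //; lra.
have ee : e * (2 * (K * K + 1)) = X - c by rewrite /e divfK // gt_eqF //; lra.
have := h e e0.
have hee : e * (2 * (K * K + 1)) = X - c by rewrite /e divfK // mulf_neq0 // gt_eqF.
nra.
Qed.

End Med.

Section GamL.
Context d (T : measurableType d) (R : realType).

Lemma Gam_sym (L : (T -> R) -> T -> R) f g : Gam L f g = Gam L g f.
Proof.
rewrite /Gam; have -> : (fun y => f y * g y) = (fun y => g y * f y).
  by apply/funext => y; rewrite mulrC.
by apply/funext => x; congr (_ / 2); lra.
Qed.

End GamL.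

Section Main.
Context d (T : measurableType d) (R : realType)
  (mu : probability T R) (A : set (T -> R)) (L : (T -> R) -> (T -> R)).
Hypothesis FW : diffusion_framework mu A L.

Lemma Gam_comp (D : nat -> R -> R) (dD : derivs_seq D) f : A f ->
  forall x, Gam L (D 0%N \o f) (D 0%N \o f) x = (D 1%N (f x)) ^+ 2 * Gam L f f x.
Proof.
move=> Af x.
have Ag := A_smooth FW dD Af.
rewrite (Gam_chain FW dD Af Ag) Gam_sym (Gam_chain FW dD Af Af) /=.
by rewrite mulrA expr2.
Qed.

Lemma GdA u : A u -> Gd u.
Proof. by move=> Au; split; [exact: A_meas FW _ Au | exact: A_bdd FW _ Au]. Qed.

Lemma GdGam u : A u -> Gd (Gam L u u).
Proof.
move=> Au; have Luu := GdA (L_A FW (A_mul FW Au Au)).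
have Lu := GdA (L_A FW Au); have gu := GdA Au.
apply: (@Gd_mul _ _ _ (fun x => L (fun y => u y * u y) x - u x * L u x - u x * L u x)).
  by apply: Gd_sub; [apply: Gd_sub => // |]; exact: Gd_mul.
exact: Gd_cst.
Qed.

End Main.
End Helpers.
Import Helpers.

Theorem mainTheorem20 (d : measure_display) (T : measurableType d) (R : realType)
  (mu : probability T R) (A : set (T -> R)) (L : (T -> R) -> (T -> R))
  (beta : R -> R) :
  diffusion_framework mu A L ->
  (forall s : R, 0 < s -> 0 <= beta s) ->
  (forall f, A f -> forall m : R, is_median mu f m ->
     forall s : R, 0 < s < 1 ->
       \int[mu]_x `|f x - m|
         <= beta s * \int[mu]_x Num.sqrt (Gam L f f x) + s * Osc mu f) ->
  forall f, A f -> forall s : R, 0 < s < 4^-1 ->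
    Var mu f <= 4 * beta (s / 2) ^+ 2 * \int[mu]_x Gam L f f x
                + s * Osc mu f ^+ 2.
Proof.
move=> FW beta0 Hyp f Af s /andP[s0 s4].
have gf := GdA FW Af.
have [mf [Mf hMf]] := gf.
have gG := GdGam FW Af.
have gS := Gd_sqrt gG.
have [m hm] := median_exists mu mf hMf.
have t0 : 0 < s / 2 by rewrite divr_gt0.
have t1 : s / 2 < 1.
  have : 4^-1 < 2 :> R by rewrite (@lt_trans _ _ 1) // ?invf_lt1 ?ltr1n // ltr1n.
  lra.
set t := s / 2 in t0 t1 *.
have B0 := beta0 t t0.
set B := beta t in B0 *.
have gfm : Gd (fun x => (f x - m) ^+ 2).
  apply: (@Gd_ext _ _ _ (fun x => (f x - m) * (f x - m))); first by move=> x; rewrite expr2.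
  apply: Gd_mul; apply: Gd_sub => //; exact: Gd_cst.
set X := \int[mu]_x (f x - m) ^+ 2.
set G := \int[mu]_x Gam L f f x.
set S := \int[mu]_x Num.sqrt (Gam L f f x).
set O := Osc mu f.
have key : forall e, 0 < e -> X <= (4 * B ^+ 2 * G + s * O ^+ 2) + e * (4 * B * S + s * O).
  move=> e e0.
  pose D := fun n => iter n (@derive1 _ R) (Phi m e).
  have dD : derivs_seq D.
    move=> n x; have dn := @Sn_iter R n (Phi m e) (Sn_Phi m e0 n.+1) x.
    have -> : D n.+1 x = 'D_1 (D n) x by rewrite /D iterS derive1E.
    exact: derivableP.
  have Ag : A (D 0%N \o f) := A_smooth FW dD Af.
  set g := D 0%N \o f in Ag *.
  have gE : forall x, g x = Phi m e (f x) by [].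
  have Gg := Gam_comp FW dD Af.
  have medg : is_median mu g 0.
    split.
      have -> : [set x | 0 <= g x] = [set x | m <= f x].
        by apply/seteqP; split => x /=; rewrite gE Phi_ge0.
      exact: hm.1.
    have -> : [set x | g x <= 0] = [set x | f x <= m].
      by apply/seteqP; split => x /=; rewrite gE Phi_le0.
    exact: hm.2.
  have t01 : 0 < t < 1 by rewrite t0 t1.
  have H := Hyp g Ag 0 medg t t01.
  have gg := GdA FW Ag.
  have gGg := GdGam FW Ag.
  have I1 : X <= \int[mu]_x `|g x - 0|.
    apply: le_Rintegral => //; first exact: Gd_int.
      by apply: Gd_int; apply: Gd_norm; apply: Gd_sub => //; exact: Gd_cst.
    by move=> x _; rewrite subr0 gE; exact: Phi_abs.
  have I2 : B * \int[mu]_x Num.sqrt (Gam L g g x) <= X / 2 + 2 * B ^+ 2 * G + 2 * B * e * S.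
    rewrite -RintegralZl //; last exact: Gd_int (Gd_sqrt gGg).
    have gk1 : Gd (fun x => (f x - m) ^+ 2 / 2).
      apply: Gd_mul => //; exact: Gd_cst.
    have gk2 : Gd (fun x => 2 * B ^+ 2 * Gam L f f x) by apply: Gd_mul; [exact: Gd_cst | exact: gG].
    have gk3 : Gd (fun x => 2 * B * e * Num.sqrt (Gam L f f x)) by apply: Gd_mul; [exact: Gd_cst | exact: gS].
    apply: (@le_trans _ _ (\int[mu]_x ((f x - m) ^+ 2 / 2 + 2 * B ^+ 2 * Gam L f f x
        + 2 * B * e * Num.sqrt (Gam L f f x)))).
      apply: le_Rintegral => //.
      - by apply: Gd_int; apply: Gd_mul; [exact: Gd_cst | exact: Gd_sqrt gGg].
      - by apply: Gd_int; apply: Gd_add => //; exact: Gd_add.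
      move=> x _; rewrite Gg sqrtrM ?sqr_ge0 // sqrtr_sqr.
      have γ0 := Gam_ge0 FW Af x.
      have r0 := sqrtr_ge0 (Gam L f f x).
      have rr := sqr_sqrtr γ0; rewrite expr2 in rr.
      have [d0 dB] := andP (dPhi_bound m e0 (f x)).
      have -> : `|D 1%N (f x)| = derive1 (Phi m e) (f x) by rewrite ger0_norm.
      set r := Num.sqrt (Gam L f f x) in r0 rr *.
      set ay := `|f x - m| in dB *.
      have hay : ay * ay = (f x - m) ^+ 2 by rewrite /ay -normrM ger0_norm ?expr2 // -expr2 sqr_ge0.
      have ay0 : 0 <= ay by exact: normr_ge0.
      set D1 := derive1 (Phi m e) (f x) in d0 dB *.
      have h1 : B * (D1 * r) <= B * (2 * (ay + e) * r).
        by apply: ler_wpM2l => //; apply: ler_wpM2r.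
      have h2 := sqr_ge0 (ay - 2 * B * r); rewrite expr2 in h2.
      rewrite -rr -hay; nra.
    rewrite RintegralD //; last exact: Gd_int gk3.
      rewrite RintegralD //; try exact: Gd_int.
      rewrite RintegralZr //; last exact: Gd_int.
      by rewrite RintegralZl // ?RintegralZl //; exact: Gd_int.
    by apply: Gd_int; exact: Gd_add.
  have [a [b [Oab [amb Og]]]] := osc_comp mf hMf hm gg.1 (projT2 (cid gg.2)) medg (@Phi_mono _ m e e0).
  have I3 : Osc mu g <= O ^+ 2 + e * O.
    apply: (le_trans Og); rewrite /O Oab; exact: Phi_osc.
  have I3' : t * Osc mu g <= t * (O ^+ 2 + e * O) by rewrite ler_wpM2l // ltW.
  have I12 := le_trans I1 H.
  have ht : s = t * 2 by rewrite /t divfK.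
  rewrite ht.
  rewrite -/B in I12; lra.
have Var_le : Var mu f <= X.
  rewrite /Var; set mu0 := \int[mu]_y f y.
  have gf0 : Gd (fun x => (f x - mu0) ^+ 2).
    apply: (@Gd_ext _ _ _ (fun x => (f x - mu0) * (f x - mu0))); first by move=> x; rewrite expr2.
    apply: Gd_mul; apply: Gd_sub => //; exact: Gd_cst.
  have gl : Gd (fun x => 2 * f x - (m + mu0)).
    apply: Gd_sub; last exact: Gd_cst.
    by apply: Gd_mul => //; exact: Gd_cst.
  have gl2 : Gd (fun x => (mu0 - m) * (2 * f x - (m + mu0))).
    by apply: Gd_mul => //; exact: Gd_cst.
  have -> : X = \int[mu]_x ((f x - mu0) ^+ 2 + (mu0 - m) * (2 * f x - (m + mu0))).
    by rewrite /X; apply: eq_Rintegral => x _; ring.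
  have i1 := Gd_int mu gf0.
  have i2 := Gd_int mu gl2.
  have i3 := Gd_int mu gl.
  have i4 : mu.-integrable setT (EFin \o (fun _ : T => m + mu0)) by apply: Gd_int; exact: Gd_cst.
  have i5 : mu.-integrable setT (EFin \o (fun x : T => 2 * f x)).
    by apply: Gd_int; apply: Gd_mul => //; exact: Gd_cst.
  have i6 : mu.-integrable setT (EFin \o f) by exact: Gd_int.
  rewrite RintegralD // RintegralZl // RintegralB // RintegralZl // Rintegral_cst //.
  have -> : fine (mu setT) = 1 by rewrite probability_setT.
  rewrite -/mu0.
  have := sqr_ge0 (mu0 - m); rewrite expr2; nra.
exact: le_trans Var_le (le_eps key).
Qed.
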